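(* Let $\mathscr{F}$ be a family of languages closed under rational transduction, union, product and Kleene closure. Let $S$ be a semigroup, $I, J$ sets, $P$ a $J \times I$ matrix with entries in $S \cup \{0\}$, and suppose $M = M^0(S; I, J; P)$ is finitely generated. If $L_\sigma(S) \in \mathscr{F}$ for some finite choice of generators $\sigma$ of $S$, then $L_\tau(M) \in \mathscr{F}$ for every finite choice of generators $\tau$ of $M$.
   Context: The Rees matrix semigroup with zero $M^0(S; I, J; P)$ (where $0 \notin S$) has elements $(I \times S \times J) \cup \{0\}$, $0$ is a zero, and $(i_1, g_1, j_1)(i_2, g_2, j_2) = (i_1, g_1 P_{j_1 i_2} g_2, j_2)$ if $P_{j_1 i_2} \in S$ and $=0$ if $P_{j_1 i_2} = 0$. For a semigroup $S$, $S^1$ denotes the monoid obtained by adjoining a new identity $1$ (even if $S$ already has one). A choice of generators for $S$ is a surjective morphism $\sigma : X^+ \to S$ from a free semigroup, finite if $X$ is finite; it extends uniquely to $\sigma^1 : X^* \to S^1$. Let $\overline{X} = \{\overline{x} : x \in X\}$ be a set of formal inverses, $\hat{X} = X \cup \overline{X}$. The loop automaton of $S$ with respect to $\sigma$ is the directed labelled graph with vertex set $S^1$, having for each $a \in S^1$ and $x \in X$ an edge from $a$ to $a(x\sigma)$ labelled $x$ and an edge from $a(x\sigma)$ to $a$ labelled $\overline{x}$. The loop problem $L_\sigma(S) \subseteq \hat{X}^*$ is the set of words labelling paths from $1$ to $1$ in this graph (including the empty word). A rational transduction is a relation between free monoids realised by a finite-state transducer. *)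

(* Defs.v *)
From mathcomp Require Import all_boot.
Set Implicit Arguments. Unset Strict Implicit. Unset Printing Implicit Defensive.

Definition lang (X : Type) := seq X -> Prop.

Definition lang_cat (X : Type) (L1 L2 : lang X) : lang X :=
  fun w => exists u v, w = u ++ v /\ L1 u /\ L2 v.

Inductive kstar (X : Type) (L : lang X) : seq X -> Prop :=
| kstar_nil : kstar L [::]
| kstar_cons u w : L u -> kstar L w -> kstar L (u ++ w).

Definition associative_op (T : Type) (mul : T -> T -> T) :=
  forall a b c, mul a (mul b c) = mul (mul a b) c.

Section Generators.
Variables (T : Type) (mul : T -> T -> T) (X : Type) (sigma : X -> T).

(** The image under sigma^+ : X^+ -> T of the nonempty word x :: w. *)
Definition word_eval (x : X) (w : seq X) : T :=
  foldl (fun a y => mul a (sigma y)) (sigma x) w.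

Definition generates : Prop := forall t, exists x w, word_eval x w = t.

(** S^1 = option T, with None the adjoined identity 1; right multiplication
    of a : S^1 by s : S. *)
Definition mul1 (a : option T) (s : T) : option T :=
  match a with None => Some s | Some a' => Some (mul a' s) end.

(** Hat X = X + X : inl x is x, inr x is the formal inverse xbar.
    Edges of the loop automaton: a --x--> a(x sigma), a(x sigma) --xbar--> a. *)
Definition loop_edge (a : option T) (l : X + X) (b : option T) : Prop :=
  match l with
  | inl x => b = mul1 a (sigma x)
  | inr x => a = mul1 b (sigma x)
  end.

Fixpoint loop_path (a : option T) (w : seq (X + X)) (b : option T) : Prop :=
  match w with
  | [::] => a = b
  | l :: w' => exists c, loop_edge a l c /\ loop_path c w' b
  end.

Definition loop_problem : lang (X + X) := fun w => loop_path None w None.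
End Generators.

Record transducer (X Y : finType) := Transducer {
  tstate : finType;
  tinit : tstate;
  tfinal : pred tstate;
  ttrans : seq (tstate * seq X * seq Y * tstate)
}.

Inductive trun (X Y : finType) (T : transducer X Y) :
  tstate T -> seq X -> seq Y -> tstate T -> Prop :=
| trun_nil (q : tstate T) : @trun X Y T q [::] [::] q
| trun_cons (q : tstate T) (u : seq X) (v : seq Y) (q1 : tstate T)
    (u' : seq X) (v' : seq Y) (q' : tstate T) :
    (q, u, v, q1) \in ttrans T -> @trun X Y T q1 u' v' q' ->
    @trun X Y T q (u ++ u') (v ++ v') q'.

Definition transduce (X Y : finType) (T : transducer X Y) (L : lang X) : lang Y :=
  fun v => exists u (q : tstate T), L u /\ tfinal q /\ @trun X Y T (tinit T) u v q.

Definition lang_family := forall X : finType, lang X -> Prop.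

Definition closed_under_rat_trans (F : lang_family) : Prop :=
  forall (X Y : finType) (T : transducer X Y) (L : lang X),
    F X L -> F Y (transduce T L).
Definition closed_under_union (F : lang_family) : Prop :=
  forall (X : finType) (L1 L2 : lang X),
    F X L1 -> F X L2 -> F X (fun w => L1 w \/ L2 w).
Definition closed_under_product (F : lang_family) : Prop :=
  forall (X : finType) (L1 L2 : lang X),
    F X L1 -> F X L2 -> F X (lang_cat L1 L2).
Definition closed_under_star (F : lang_family) : Prop :=
  forall (X : finType) (L : lang X), F X L -> F X (kstar L).

(** Rees matrix semigroup with zero M^0(S; I, J; P): carrier
    option (I * S * J), None being the zero; P j i = None means P_{ji} = 0. *)
Definition rees_mul (S I J : Type) (mul : S -> S -> S) (P : J -> I -> option S)
  (a b : option (I * S * J)) : option (I * S * J) :=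
  match a, b with
  | Some (i1, g1, j1), Some (i2, g2, j2) =>
      match P j1 i2 with
      | Some p => Some (i1, mul (mul g1 p) g2, j2)
      | None => None
      end
  | _, _ => None
  end.

(* Main.v *)
Require Import Defs.
From mathcomp Require Import all_boot.
From Stdlib Require Import ClassicalEpsilon FunctionalExtensionality PropExtensionality.
From mathcomp Require Import zify.
Set Implicit Arguments. Unset Strict Implicit. Unset Printing Implicit Defensive.

Section Gen.
Variables (T : Type) (mul : T -> T -> T) (X : Type) (sigma : X -> T).

Definition ev1 (a : option T) (w : seq X) : option T :=
  foldl (fun a x => mul1 mul a (sigma x)) a w.

Lemma lp_cat a u v b :
  loop_path mul sigma a (u ++ v) b <->
  exists c, loop_path mul sigma a u c /\ loop_path mul sigma c v b.
Proof.
elim: u a => [|l u IH] a /=.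
  by split; [move=> H; exists a | move=> [c [-> H]]].
split.
  move=> [c [Hc Hp]]; have [d [H1 H2]] := (IH c).1 Hp.
  by exists d; split => //; exists c.
move=> [d [[c [Hc H1]] H2]]; exists c; split => //.
by apply/(IH c); exists d.
Qed.

Lemma lp_fwd a w b :
  loop_path mul sigma a (map inl w) b <-> b = ev1 a w.
Proof.
elim: w a b => [|x w IH] a b /=; first by split => ->.
split.
  move=> [c [-> H]]. exact: (proj1 (IH _ _) H).
move=> ->; exists (mul1 mul a (sigma x)); split => //. apply (IH _ _).2. by [].
Qed.

Lemma lp_bwd a w b :
  loop_path mul sigma a (map inr (rev w)) b <-> a = ev1 b w.
Proof.
elim: w a b => [|x w IH] a b /=; first by split => ->.
rewrite rev_cons -cats1 map_cat lp_cat.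
split.
  move=> [c [H1 [d [H2 H3]]]] /=.
  move: H2; rewrite /loop_edge => H2; subst.
  by apply/IH.
move=> H; exists (mul1 mul b (sigma x)); split; first by apply/IH.
by exists b.
Qed.

Lemma ev1_cons_some a x w : exists t, ev1 a (x :: w) = Some t.
Proof.
rewrite /ev1 /=.
have : exists t, mul1 mul a (sigma x) = Some t by case: a => [a|] /=; eexists.
move: (mul1 mul a (sigma x)) => a0 [t0 ->].
elim: w t0 => [|y w IH] t0 /=; first by exists t0.
exact: IH.
Qed.

Hypothesis assoc : associative_op mul.

Lemma foldl_mulA h a w :
  foldl (fun a y => mul a (sigma y)) (mul h a) w =
  mul h (foldl (fun a y => mul a (sigma y)) a w).
Proof.
elim: w a => [|y w IH] a //=.
by rewrite -assoc IH.
Qed.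

Lemma ev1_some h w :
  ev1 (Some h) w = Some (foldl (fun a y => mul a (sigma y)) h w).
Proof. by elim: w h => [|y w IH] h //=; rewrite -IH. Qed.

Lemma ev1_word t x w :
  ev1 t (x :: w) = mul1 mul t (word_eval mul sigma x w).
Proof.
case: t => [h|] /=; rewrite /ev1 /= -/(ev1 _ w) ev1_some //.
by rewrite foldl_mulA.
Qed.
End Gen.

Section Main.
Variables (S : Type) (mul : S -> S -> S) (assoc : associative_op mul).
Variables (I J : Type) (P : J -> I -> option S).
Variables (X : finType) (sigma : X -> S) (genS : generates mul sigma).
Variables (Y : finType) (tau : Y -> option (I * S * J)).

Definition M := option (I * S * J).
Definition rmul := rees_mul mul P.

Lemma wd_ex (s : S) : exists p : X * seq X, word_eval mul sigma p.1 p.2 = s.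
Proof. have [x [w H]] := genS s. by exists (x, w). Qed.

Definition wdp (s : S) := proj1_sig (constructive_indefinite_description _ (wd_ex s)).
Definition wd (s : S) : seq X := (wdp s).1 :: (wdp s).2.

Lemma ev1_wd t s : ev1 mul sigma t (wd s) = mul1 mul t s.
Proof.
rewrite /wd ev1_word //.
by rewrite /wdp; case: (constructive_indefinite_description _ _) => p /= ->.
Qed.

Definition wdo (o : option S) : seq X := if o is Some s then wd s else [::].
Lemma wd_cons s : exists x w, wd s = x :: w.
Proof. by rewrite /wd; eexists; eexists. Qed.

Opaque wd.
Lemma wdoS s : wdo (Some s) = wd s. Proof. by []. Qed.

Definition rowof (y : Y) : option I := if tau y is Some (i, _, _) then Some i else None.
Definition colof (y : Y) : option J := if tau y is Some (_, _, j) then Some j else None.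
Definition gen (y : Y) : option S := if tau y is Some (_, g, _) then Some g else None.
Definition mult (b y : Y) : option S :=
  match colof b, tau y with
  | Some j, Some (i', g', _) => if P j i' is Some p then Some (mul p g') else None
  | _, _ => None
  end.

Local Notation Q := (option ((Y * Y) + bool)%type).
Definition Init : Q := None.
Definition Col (a b : Y) : Q := Some (inl (a, b)).
Definition Zero : Q := Some (inr false).
Definition Fin : Q := Some (inr true).

Local Notation Lab := ((Y + Y + (Y * Y * Y) + (Y * Y * Y) + (Y * Y * Y * Y * Y) + (Y * Y * Y)
   + (Y + Y) + (X + X) + (Y * Y * Y * X) + Y)%type).

Local Notation Tr := ((Q * seq (X + X) * seq (Y + Y) * Q)%type).

Definition tr (k : Lab) : Tr :=
  match k with
  | inl (inl (inl (inl (inl (inl (inl (inl (inl y)))))))) =>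
      (Init, map inl (wdo (gen y)), [:: inl y], Col y y)
  | inl (inl (inl (inl (inl (inl (inl (inl (inr y)))))))) =>
      (Init, [::], [:: inl y], Zero)
  | inl (inl (inl (inl (inl (inl (inl (inr (a, b, y)))))))) =>
      (Col a b, map inl (wdo (mult b y)), [:: inl y], Col a y)
  | inl (inl (inl (inl (inl (inl (inr (a, b, y))))))) =>
      (Col a b, [::], [:: inl y], Zero)
  | inl (inl (inl (inl (inl (inr (a, b, c, y, z)))))) =>
      (Col a b, map inr (rev (wdo (mult c y))) ++ map inr (rev (wdo (gen z)))
                 ++ map inl (wdo (gen z)), [:: inr y], Col a c)
  | inl (inl (inl (inl (inr (a, b, y))))) =>
      (Col a b, map inr (rev (wdo (gen y))), [:: inr y], Fin)
  | inl (inl (inl (inr l))) => (Zero, [::], [:: l], Zero)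
  | inl (inl (inr xh)) => (Zero, [:: xh], [::], Zero)
  | inl (inr (a, b, z, x)) => (Zero, [:: inl x], [:: inr z], Col a b)
  | inr y => (Zero, [::], [:: inr y], Fin)
  end.

Definition validP (k : Lab) : Prop :=
  match k with
  | inl (inl (inl (inl (inl (inl (inl (inl (inl y)))))))) => gen y <> None
  | inl (inl (inl (inl (inl (inl (inl (inl (inr y)))))))) => tau y = None
  | inl (inl (inl (inl (inl (inl (inl (inr (a, b, y)))))))) => mult b y <> None
  | inl (inl (inl (inl (inl (inl (inr (a, b, y))))))) => mult b y = None
  | inl (inl (inl (inl (inl (inr (a, b, c, y, z)))))) =>
      colof b = colof y /\ mult c y <> None /\ gen z <> None
  | inl (inl (inl (inl (inr (a, b, y))))) =>
      tau y <> None /\ rowof a = rowof y /\ colof b = colof y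
  | inl (inl (inl (inr l))) => True
  | inl (inl (inr xh)) => True
  | inl (inr (a, b, z, x)) => rowof a <> None /\ colof b <> None /\ mult b z = None
  | inr y => tau y = None
  end.

Definition cb (p : Prop) : bool := if excluded_middle_informative p then true else false.
Lemma cbP p : cb p = true <-> p.
Proof. by rewrite /cb; case: excluded_middle_informative. Qed.

Definition ttr : seq Tr := [seq tr k | k <- enum {: Lab} & cb (validP k)].

Lemma mem_ttr t : t \in ttr <-> exists k, validP k /\ t = tr k.
Proof.
split.
  move=> /mapP [k]; rewrite mem_filter => /andP [Hk _] ->.
  by exists k; split => //; apply/cbP.
move=> [k [Hk ->]]; apply: map_f; rewrite mem_filter mem_enum andbT.
by apply/cbP.
Qed.

Definition TT : transducer (X + X)%type (Y + Y)%type :=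
  @Transducer (X + X)%type (Y + Y)%type _ Init (fun q => q == Fin) ttr.


Definition Inv (q : Q) (s : option S) (m : option M) : Prop :=
  match q with
  | None => s = None /\ m = None
  | Some (inl (a, b)) => exists i j h, rowof a = Some i /\ colof b = Some j /\
                           s = Some h /\ m = Some (Some (i, h, j))
  | Some (inr false) => m = Some None
  | Some (inr true) => m = None
  end.

Lemma multP b y s : mult b y = Some s -> exists j i' g' j' p, colof b = Some j /\
  tau y = Some (i', g', j') /\ P j i' = Some p /\ s = mul p g'.
Proof.
rewrite /mult; case: (colof b) => [j|] //.
case: (tau y) => [[[i' g'] j']|] //.
case E: (P j i') => [p|] // [<-].
by exists j, i', g', j', p.
Qed.

Lemma multN b y j i h : colof b = Some j -> mult b y = None ->
  rmul (Some (i, h, j)) (tau y) = None.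
Proof.
rewrite /mult /rmul => ->; case: (tau y) => [[[i' g'] j']|] //=.
by case: (P j i').
Qed.

Lemma multS b y j i' g' j' p : colof b = Some j -> tau y = Some (i', g', j') ->
  P j i' = Some p -> mult b y = Some (mul p g').
Proof. by rewrite /mult => -> -> ->. Qed.

Lemma multN' b y j i h : colof b = Some j -> rmul (Some (i, h, j)) (tau y) = None ->
  mult b y = None.
Proof.
rewrite /mult /rmul => ->; case: (tau y) => [[[i' g'] j']|] //=.
by case: (P j i').
Qed.

Lemma step_sound k s s' m : validP k -> Inv (tr k).1.1.1 s m ->
  loop_path mul sigma s (tr k).1.1.2 s' -> ((tr k).2 = Fin -> s' = None) ->
  exists m', loop_path rmul tau m (tr k).1.2 m' /\ Inv (tr k).2 s' m'.
Proof.
case: k => [[[[[[[[[y|y]|[[a b] y]]|[[a b] y]]|[[[[a b] c] y] z]]|[[a b] y]]|l]|xh]|[[[a b] z] x]]|y] /=.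
-
  rewrite /gen; case E: (tau y) => [[[i g] j]|] // _ [-> ->].
  move/lp_fwd; rewrite wdoS ev1_wd /= => -> _.
  exists (Some (tau y)); split; first by exists (Some (tau y)); split; rewrite ?E.
  by exists i, j, g; rewrite /rowof /colof E; repeat split.
-
  move=> E [-> ->] /= <- _.
  exists (Some (tau y)); split; first by exists (Some (tau y)); split.
  by rewrite E.
-
  case E: (mult b y) => [sm|] // _ [i [j [h [Hr [Hc [-> ->]]]]]].
  have [j1 [i' [g' [j' [p [Hc1 [Ht [Hp ->]]]]]]]] := multP E.
  move: Hc1; rewrite Hc => -[Ej]; subst j1.
  move/lp_fwd; rewrite ev1_wd /= => -> _.
  exists (Some (Some (i, mul (mul h p) g', j'))); split.
    by exists (Some (Some (i, mul (mul h p) g', j'))); split => //; rewrite Ht /rmul /= Hp.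
  exists i, j', (mul (mul h p) g'); split => //; split; first by rewrite /colof Ht.
  by rewrite assoc.
-
  move=> E [i [j [h [Hr [Hc [-> ->]]]]]] /= <- _.
  have := multN i h Hc E; rewrite /rmul /= => HN.
  exists (Some None); split => //.
  by exists (Some None); split => //; rewrite HN.
-
  move=> [Hcb [Hm Hg]].
  have [sm E] : exists sm, mult c y = Some sm.
    by move: Hm; case: (mult c y) => [sm' _|/(_ erefl) []]; exists sm'.
  rewrite E.
  have [[[iz gz] jz] Ez] : exists t, tau z = Some t.
    by move: Hg; rewrite /gen; case: (tau z) => [t' _|/(_ erefl) []]; exists t'.
  rewrite /gen Ez.
  move=> [i [j [h [Hr [Hc [-> ->]]]]]].
  move/lp_cat => -[s1 [H1 /lp_cat [s2 [H2 H3]]]] _.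
  move/lp_bwd: H1; move/lp_bwd: H2; move/lp_fwd: H3; rewrite !ev1_wd => Hs' Hs1 Hh.
  have [j0 [i' [g' [j' [p [Hc0 [Ht [Hp Esm]]]]]]]] := multP E.
  subst sm.
  have Es : s' = s1 by rewrite Hs' Hs1.
  have [h0 Eh0] : exists h0, s1 = Some h0.
    by rewrite Hs1; case: (s2) => [t|] /=; [exists (mul t gz) | exists gz].
  rewrite Es; clear Es Hs' Hs1.
  subst s1; move: Hh => /= [Hh].
  exists (Some (Some (i, h0, j0))); split.
    exists (Some (Some (i, h0, j0))); split => //.
    rewrite /= Ht /rmul /= Hp Hh assoc.
    by move: Hcb; rewrite Hc /colof Ht => -[->].
  by exists i, j0, h0.
-
  move=> [Ht [Hra Hcb]].
  have [[[i' g'] j'] Ey] : exists t, tau y = Some t.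
    by move: Ht; case: (tau y) => [t' _|/(_ erefl) []]; exists t'.
  rewrite Ey.
  move=> [i [j [h [Hr [Hc [-> ->]]]]]].
  move/lp_bwd; rewrite /gen Ey /= ev1_wd => Hh Hs'.
  have Es' := Hs' erefl; subst s'.
  move: Hh => /= [->].
  move: Hra Hcb; rewrite Hr Hc /rowof /colof Ey => -[->] [->].
  exists None; split => //.
  by exists None; split => //; rewrite Ey.
-
  move=> _ -> /= <- _.
  exists (Some None); split => //.
  exists (Some None); split => //.
  by case: l.
-
  move=> _ -> _ _.
  by exists (Some None).
-
  move=> [Ha [Hb Em]] ->.
  have [i Ea] : exists i, rowof a = Some i.
    by move: Ha; case: (rowof a) => [i' _|/(_ erefl) []]; exists i'.
  have [j Eb] : exists j, colof b = Some j.
    by move: Hb; case: (colof b) => [j' _|/(_ erefl) []]; exists j'.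
  move=> [s1 [-> <-]] _.
  have [h Eh] : exists h, mul1 mul s (sigma x) = Some h by case: s; eexists.
  rewrite Eh.
  exists (Some (Some (i, h, j))); split.
    have := multN i h Eb Em; rewrite /rmul /= => HN.
    by exists (Some (Some (i, h, j))); split => //=; rewrite HN.
  by exists i, j, h.
-
  move=> E -> /= <- _.
  exists None; split => //.
  by exists None; split => //; rewrite E.
Qed.


Lemma tr_src k : (tr k).1.1.1 != Fin.
Proof.
by case: k => [[[[[[[[[y|y]|[[a b] y]]|[[a b] y]]|[[[[a b] c] y] z]]|[[a b] y]]|l]|xh]|[[[a b] z] x]]|y].
Qed.

Lemma trun_Fin q u v q' : @trun _ _ TT q u v q' -> q = Fin -> u = [::].
Proof.
case => // q0 u0 v0 q1 u1 v1 q2 Hin _ Eq; subst q0.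
move/mem_ttr: Hin => [k [_ Hk]].
by have := tr_src k; rewrite -Hk.
Qed.

Lemma run_sound q u v qf : @trun _ _ TT q u v qf -> forall s m, Inv q s m ->
  loop_path mul sigma s u None -> qf = Fin -> loop_path rmul tau m v None.
Proof.
elim => [q0 | q0 u0 v0 q1 u1 v1 q2 Hin Hrun IH] s m HI Hp Hf.
  by subst q0; move: HI => /= ->.
move/mem_ttr: Hin => [k [Hv Hk]].
move/lp_cat: Hp => [s1 [Hp1 Hp2]].
have Hfin : q1 = Fin -> s1 = None.
  by move=> E; move: (trun_Fin Hrun E) Hp2 => -> /=.
have := @step_sound k s s1 m Hv; rewrite -Hk /= => H.
have [m1 [Hm1 HI1]] := H HI Hp1 Hfin.
apply/lp_cat; exists m1; split => //.
exact: IH HI1 Hp2 Hf.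
Qed.

Lemma trun_step k u' v' q' : validP k -> @trun _ _ TT (tr k).2 u' v' q' ->
  @trun _ _ TT (tr k).1.1.1 ((tr k).1.1.2 ++ u') ((tr k).1.2 ++ v') q'.
Proof.
move=> Hv.
have := (proj2 (mem_ttr (tr k))) (ex_intro _ k (conj Hv erefl)).
case: (tr k) => [[[q u] v] q1] /= Hin Hr.
exact: (@trun_cons _ _ TT q u v q1 u' v' q' Hin Hr).
Qed.

Lemma trun_cat q u v q1 u' v' q' : @trun _ _ TT q u v q1 -> @trun _ _ TT q1 u' v' q' ->
  @trun _ _ TT q (u ++ u') (v ++ v') q'.
Proof.
elim => // q0 u0 v0 q2 u1 v1 q3 Hin _ IH H.
rewrite -!catA; exact: (trun_cons Hin (IH H)).
Qed.

Lemma zero_read r : @trun _ _ TT Zero r [::] Zero.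
Proof.
elim: r => [|xh r IH]; first exact: trun_nil.
exact: (@trun_step (inl (inl (inr xh)) : Lab) r [::] Zero Logic.I IH).
Qed.

Lemma back1 s : exists r, loop_path mul sigma s r None.
Proof.
case: s => [h|]; last by exists [::].
by exists (map inr (rev (wd h))); apply/lp_bwd; rewrite ev1_wd.
Qed.

Variable genM : generates rmul tau.

Lemma fg_row (i : I) (h : S) (j : J) : exists a, rowof a = Some i.
Proof.
have [x [w H]] := genM (Some (i, h, j)).
suff : forall e0 w h' j', foldl (fun a y => rmul a (tau y)) e0 w = Some (i, h', j') ->
  exists h1 j1, e0 = Some (i, h1, j1).
  move/(_ (tau x) w h j H) => [h1 [j1 E]].
  by exists x; rewrite /rowof E.
move=> e0 w0; elim: w0 e0 => [|y w0 IH] e0 h' j' /=.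
  by move=> ->; exists h', j'.
move/IH => [h1 [j1]].
rewrite /rmul; case: e0 => [[[i0 g0] j0]|] //=.
case: (tau y) => [[[i2 g2] j2]|] //=.
case: (P j0 i2) => [p|] //= [-> _ _].
by exists g0, j0.
Qed.

Lemma fg_col (i : I) (h : S) (j : J) : exists z iz gz, tau z = Some (iz, gz, j) /\
  (h = gz \/ exists t, h = mul t gz).
Proof.
have [x [w H]] := genM (Some (i, h, j)).
move: H; rewrite /word_eval; case/lastP: w => [|w z] /=.
  by move=> E; exists x, i, h; split => //; left.
rewrite foldl_rcons.
case: (foldl _ _ _) => [[[i1 h1] j1]|]; rewrite /rmul /=; last by [].
case E: (tau z) => [[[i2 g2] j2]|] //=.
case: (P j1 i2) => [p|] //= [_ <- <-].
exists z, i2, g2; split => //; right.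
by exists (mul h1 p).
Qed.


Definition L1 y : Lab := inl (inl (inl (inl (inl (inl (inl (inl (inl y)))))))).
Definition L2 y : Lab := inl (inl (inl (inl (inl (inl (inl (inl (inr y)))))))).
Definition L3 a b y : Lab := inl (inl (inl (inl (inl (inl (inl (inr (a, b, y)))))))).
Definition L4 a b y : Lab := inl (inl (inl (inl (inl (inl (inr (a, b, y))))))).
Definition L5 a b c y z : Lab := inl (inl (inl (inl (inl (inr (a, b, c, y, z)))))).
Definition L6 a b y : Lab := inl (inl (inl (inl (inr (a, b, y))))).
Definition L7 l : Lab := inl (inl (inl (inr l))).
Definition L9 a b z x : Lab := inl (inr (a, b, z, x)).
Definition L10 y : Lab := inr y.

Fixpoint FR (m : option M) (w : seq (Y + Y)%type) : Prop :=
  match w with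
  | [::] => m = None
  | l :: w' => m <> None /\ exists c, loop_edge rmul tau m l c /\ FR c w'
  end.

Lemma SomeN (A : Type) (x : A) : Some x <> None. Proof. by []. Qed.

Lemma FR_None w : FR None w -> w = [::].
Proof. by case: w => // l w [H]; exfalso; apply: H. Qed.

Lemma comp w : forall q s m, Inv q s m -> m <> None -> FR m w ->
  exists u qf, @trun _ _ TT q u w qf /\ qf = Fin /\ loop_path mul sigma s u None.
Proof.
elim: w => [|l w IH] q s m HI Hm /=; first by move=> E; exfalso; apply: Hm.
move=> [_ [c [He HF]]].
case: q HI => [[[a b]|[]]|] /= HI.
-
  move: HI => [i [j [h [Hr [Hc [Es Em]]]]]]; subst s m.
  case: l He => [y|y]; rewrite /loop_edge.
  +
    case Et: (tau y) => [[[i' g'] j']|]; [case Ep: (P j i') => [p|]|]; rewrite /rmul /= ?Et ?Ep => Ec; subst c.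
    * have Hmult := multS Hc Et Ep.
      have HI' : Inv (Col a y) (Some (mul (mul h p) g')) (Some (Some (i, mul (mul h p) g', j'))).
        by exists i, j', (mul (mul h p) g'); rewrite /colof Et.
      have [u' [qf [Hrun [Hqf Hp']]]] := IH _ _ _ HI' (@SomeN _ _) HF.
      exists (map inl (wdo (mult b y)) ++ u'), qf; split; last split => //.
        by apply: (@trun_step (L3 a b y)) => //=; rewrite Hmult.
      apply/lp_cat; exists (Some (mul (mul h p) g')); split => //.
      by apply/lp_fwd; rewrite Hmult wdoS ev1_wd /= assoc.
    * have Hmult : mult b y = None by apply: (multN' (i := i) (h := h) Hc); rewrite /rmul /= Et Ep.
      have [u' [qf [Hrun [Hqf Hp']]]] := IH Zero (Some h) (Some None) erefl (@SomeN _ _) HF.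
      exists ([::] ++ u'), qf; split; last split => //.
      exact: (@trun_step (L4 a b y)).
    * have Hmult : mult b y = None by apply: (multN' (i := i) (h := h) Hc); rewrite /rmul /= Et.
      have [u' [qf [Hrun [Hqf Hp']]]] := IH Zero (Some h) (Some None) erefl (@SomeN _ _) HF.
      exists ([::] ++ u'), qf; split; last split => //.
      exact: (@trun_step (L4 a b y)).
  +
    case: c HF => [[[[i0 h0] j0]|]|] HF He.
    * move: He; rewrite /rmul /=.
      case Et: (tau y) => [[[i' g'] j']|] //=; case Ep: (P j0 i') => [p|] //= [Ei Eh Ej].
      subst i0 h j'.
      have [z [iz [gz [Ez Hz]]]] := fg_col i h0 j0.
      have Hcz : colof z = Some j0 by rewrite /colof Ez.
      have Hmult := multS Hcz Et Ep.
      have HI' : Inv (Col a z) (Some h0) (Some (Some (i, h0, j0))) by exists i, j0, h0.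
      have [u' [qf [Hrun [Hqf Hp']]]] := IH _ _ _ HI' (@SomeN _ _) HF.
      exists ((map inr (rev (wdo (mult z y))) ++ map inr (rev (wdo (gen z)))
                 ++ map inl (wdo (gen z))) ++ u'), qf; split; last split => //.
        apply: (@trun_step (L5 a b z y z)) => //=.
        split; first by rewrite Hc /colof Et.
        by rewrite Hmult /gen Ez.
      apply/lp_cat; exists (Some h0); split => //.
      apply/lp_cat; exists (Some h0); split.
        by apply/lp_bwd; rewrite Hmult wdoS ev1_wd /= assoc.
      have [t1 Ht1] : exists t1, Some h0 = mul1 mul t1 gz.
        by case: Hz => [->|[t ->]]; [exists None | exists (Some t)].
      apply/lp_cat; exists t1; rewrite /gen Ez wdoS; split.
        by apply/lp_bwd; rewrite ev1_wd.
      by apply/lp_fwd; rewrite ev1_wd.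
    * by move: He; rewrite /rmul /=.
    * move: He => /= [Et].
      have Ew := FR_None HF; subst w.
      exists (map inr (rev (wdo (gen y))) ++ [::]), Fin; split; last split => //.
        apply: (@trun_step (L6 a b y)) => /=; last exact: trun_nil.
        by rewrite Hr Hc /rowof /colof -Et.
      by rewrite cats0; apply/lp_bwd; rewrite /gen -Et wdoS ev1_wd.
- by exfalso; apply: Hm.
-
  subst m.
  case: l He => [y|y]; rewrite /loop_edge.
  + move=> /= Ec; subst c.
    have [u' [qf [Hrun [Hqf Hp']]]] := IH Zero s (Some None) erefl (@SomeN _ _) HF.
    exists ([::] ++ u'), qf; split; last split => //.
    exact: (@trun_step (L7 (inl y))).
  + case: c HF => [[[[i h] j]|]|] HF He.
    * move: He => /= [Hz].
      have [a Ha] := fg_row i h j.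
      have [b [ib [gb [Eb _]]]] := fg_col i h j.
      have Hcb : colof b = Some j by rewrite /colof Eb.
      have Hmult : mult b y = None by apply: (multN' (i := i) (h := h) Hcb).
      have HI' : Inv (Col a b) (Some h) (Some (Some (i, h, j))) by exists i, j, h.
      have [u' [qf [Hrun [Hqf Hp']]]] := IH _ _ _ HI' (@SomeN _ _) HF.
      have [r Hr] := back1 s.
      have [x [w0 Ewd]] := wd_cons h.
      have Ewd' := lastI x w0.
      set p0 := belast x w0 in Ewd'; set x0 := last x w0 in Ewd'.
      have Eh : mul1 mul (ev1 mul sigma None p0) (sigma x0) = Some h.
        by have := ev1_wd None h; rewrite Ewd Ewd' /ev1 foldl_rcons.
      exists ((r ++ map inl p0) ++ ([:: inl x0] ++ u')), qf; split; last split => //.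
        apply: (@trun_cat Zero (r ++ map inl p0) [::] Zero ([:: inl x0] ++ u') ([:: inr y] ++ w) qf); first exact: zero_read.
        apply: (@trun_step (L9 a b y x0)) => //=.
        by split; [rewrite Ha | split; [rewrite Hcb |]].
      apply/lp_cat; exists (ev1 mul sigma None p0); split.
        apply/lp_cat; exists None; split => //.
        by apply/lp_fwd.
      apply/lp_cat; exists (Some h); split => //.
      by exists (Some h); split.
    * have [u' [qf [Hrun [Hqf Hp']]]] := IH Zero s (Some None) erefl (@SomeN _ _) HF.
      exists ([::] ++ u'), qf; split; last split => //.
      exact: (@trun_step (L7 (inr y))).
    * move: He => /= [Et].
      have Ew := FR_None HF; subst w.
      have [r Hr] := back1 s.
      exists (r ++ ([::] ++ [::])), Fin; split; last split => //.
        apply: (@trun_cat Zero r [::] Zero ([::] ++ [::]) ([:: inr y] ++ [::]) Fin); first exact: zero_read.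
        by apply: (@trun_step (L10 y)) => //=; exact: trun_nil.
      by rewrite /= cats0.
-
  by case: HI => _ E; exfalso; apply: Hm.
Qed.


Definition K := transduce TT (loop_problem mul sigma).

Lemma K_of_FR l w c : loop_edge rmul tau None l c -> FR c w -> K (l :: w).
Proof.
case: l => y; rewrite /loop_edge /=; last by case: c => [?|] [].
move=> Ec HF; subst c.
case Et: (tau y) HF => [[[i g] j]|] HF.
- have HI' : Inv (Col y y) (Some g) (Some (Some (i, g, j))).
    by exists i, j, g; rewrite /rowof /colof Et.
  have [u' [qf [Hrun [Hqf Hp']]]] := comp HI' (@SomeN _ _) HF.
  exists (map inl (wdo (gen y)) ++ u'), qf; split; last split.
  + apply/lp_cat; exists (Some g); split => //.
    by apply/lp_fwd; rewrite /gen Et wdoS ev1_wd.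
  + by subst qf; exact: eqxx.
  + by apply: (@trun_step (L1 y)) => //=; rewrite /gen Et.
- have [u' [qf [Hrun [Hqf Hp']]]] := comp (q := Zero) (s := None) (m := Some None) erefl (@SomeN _ _) HF.
  exists ([::] ++ u'), qf; split; first exact: Hp'.
  split; first by subst qf; exact: eqxx.
  exact: (@trun_step (L2 y)).
Qed.

Lemma K_sound v : K v -> loop_problem rmul tau v.
Proof.
move=> [u [q [Hu [Hf Hr]]]].
apply: (run_sound Hr (s := None) (m := None) (conj erefl erefl) Hu).
exact/eqP.
Qed.

Lemma split_first w m : m <> None -> loop_path rmul tau m w None ->
  exists w1 w2, w = w1 ++ w2 /\ FR m w1 /\ loop_path rmul tau None w2 None.
Proof.
elim: w m => [|l w IH] m Hm /=; first by move=> E; exfalso; apply: Hm.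
move=> [c [He Hp]].
case: c He Hp => [c|] He Hp.
- have [w1 [w2 [-> [H1 H2]]]] := IH _ (@SomeN _ _) Hp.
  exists (l :: w1), w2; split => //; split => //=; split => //.
  by exists (Some c).
- exists [:: l], w; split => //; split => //=; split => //.
  by exists None.
Qed.

Lemma edge_none l c : loop_edge rmul tau None l c -> c <> None.
Proof.
case: l => y; rewrite /loop_edge /=; first by move=> ->; exact: SomeN.
by case: c => [c|] /= H.
Qed.

Lemma L_kstar_n n : forall w, size w <= n ->
  loop_path rmul tau None w None -> kstar K w.
Proof.
elim: n => [|n IH] w.
  by case: w => // _ _; constructor.
case: w => [|l w]; first by move=> _ _; constructor.
move=> Hs /= [c [He Hp]].
have Hc := edge_none He.
have [w1 [w2 [Ew [H1 H2]]]] := split_first Hc Hp.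
rewrite Ew -cat_cons; constructor.
  exact: K_of_FR He H1.
apply: IH H2; move: Hs; rewrite Ew /= size_cat; lia.
Qed.

Lemma L_kstar w : loop_path rmul tau None w None -> kstar K w.
Proof. exact: (@L_kstar_n (size w) w (leqnn _)). Qed.

Lemma kstar_L w : kstar K w -> loop_path rmul tau None w None.
Proof.
elim => // u w0 Hu _ IH.
apply/lp_cat; exists None; split => //.
exact: K_sound.
Qed.

End Main.


Theorem theorem4p2 (F : lang_family)
  (HFtrans : closed_under_rat_trans F) (HFunion : closed_under_union F)
  (HFprod : closed_under_product F) (HFstar : closed_under_star F)
  (S : Type) (mul : S -> S -> S) (Hassoc : associative_op mul)
  (I J : Type) (P : J -> I -> option S)
  (HMfg : exists (X : finType) (tau : X -> option (I * S * J)),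
            generates (rees_mul mul P) tau) :
  (exists (X : finType) (sigma : X -> S),
      generates mul sigma /\ F (X + X)%type (loop_problem mul sigma)) ->
  forall (Y : finType) (tau : Y -> option (I * S * J)),
    generates (rees_mul mul P) tau ->
    F (Y + Y)%type (loop_problem (rees_mul mul P) tau).
Proof.
move=> [X [sigma [genS HL]]] Y tau genM.
have Heq : loop_problem (rees_mul mul P) tau = kstar (K P genS tau).
  apply: functional_extensionality => w; apply: propositional_extensionality.
  split; first exact: (@L_kstar S mul Hassoc I J P X sigma genS Y tau genM w).
  exact: (@kstar_L S mul Hassoc I J P X sigma genS Y tau w).
rewrite Heq; apply: HFstar; apply: HFtrans; exact: HL.
Qed.
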